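(* Let $\Delta=\delta_x\times\delta_y$ with $x_k=y_k=k/10$, $k=0,\dots,10$, and define $\langle A\rangle,\langle B\rangle:\Delta\to\mathbb{R}$ by $\langle A\rangle(j/10,k/10)=[A]_{j+1,k+1}$, $\langle B\rangle(j/10,k/10)=[B]_{j+1,k+1}$ ($j,k=0,\dots,10$), where $$[A]=\tfrac{1}{50}\begin{bmatrix} 0&0&0&0&0&0&0&0&0&0&0\\ 0&0&1&2&3&4&5&5&5&5&5\\ 0&1&2&3&3&4&5&10&10&10&10\\ 0&2&2&5&7&7&8&13&15&15&15\\ 0&3&3&6&7&7&8&13&18&20&20\\ 0&4&4&6&9&11&11&16&21&25&25\\ 0&5&5&7&9&11&11&16&21&26&30\\ 0&5&10&12&14&16&16&21&26&31&35\\ 0&5&10&15&19&21&21&26&31&36&40\\ 0&5&10&15&20&25&26&31&36&41&45\\ 0&5&10&15&20&25&30&35&40&45&50 \end{bmatrix},\quad [B]=\tfrac{1}{50}\begin{bmatrix} 0&0&0&0&0&0&0&0&0&0&0\\ 0&1&2&3&4&5&5&5&5&5&5\\ 0&2&2&3&4&5&6&10&10&10&10\\ 0&3&3&6&7&8&9&14&15&15&15\\ 0&4&4&6&8&8&9&14&18&20&20\\ 0&5&5&7&9&11&12&17&22&25&25\\ 0&5&6&8&10&12&12&17&22&26&30\\ 0&5&10&13&15&17&17&22&27&31&35\\ 0&5&10&15&19&21&22&27&32&36&40\\ 0&5&10&15&20&25&26&31&36&41&45\\ 0&5&10&15&20&25&30&35&40&45&50 \end{bmatrix}.$$ Then $\langle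 A\rangle$ is a discrete quasi-copula, $\langle B\rangle=\langle A\rangle_M$, $(\langle A\rangle,\langle B\rangle)$ is a discrete imprecise copula, and there is no discrete copula $C$ on $\Delta$ with $\langle A\rangle\le C\le\langle B\rangle$. Consequently $(\langle A\rangle^{\mathrm{BL}},\langle B\rangle^{\mathrm{BL}})$ is an imprecise copula on $[0,1]^2$ for which no copula $C$ satisfies $\langle A\rangle^{\mathrm{BL}}\le C\le\langle B\rangle^{\mathrm{BL}}$.
   Context: All points and rectangle corners are in the mesh $\Delta$ unless stated otherwise. For $Q:\Delta\to\mathbb{R}$, $V_Q([s_1,s_2]\times[t_1,t_2])=Q(s_1,t_1)+Q(s_2,t_2)-Q(s_2,t_1)-Q(s_1,t_2)$. Discrete copula: grounded ($Q(x,0)=Q(0,y)=0$), neutral element 1 ($Q(x,1)=x$, $Q(1,y)=y$), $V_Q\ge0$ on all rectangles with corners in $\Delta$; discrete quasi-copula: grounded, neutral element 1, $V_Q\ge0$ on rectangles with corners in $\Delta$ having a side on the boundary of $[0,1]^2$. Defects: for $\mathbf{x}\in\Delta$, $D^Q_\nearrow(\mathbf{x})$, $D^Q_\swarrow(\mathbf{x})$ are the minima of $V_Q(R)$ over (possibly degenerate) rectangles with corners in $\Delta$ having $\mathbf{x}$ as southwest, respectively northeast, corner; $D^Q_M=\min(D^Q_\nearrow,D^Q_\swarrow)$ and $Q_M=Q-D^Q_M$. Discrete imprecise copula: pair $(A,B)$ on $\Delta$, both grounded with neutral element 1, such that for every rectangle with corners in $\Delta$ and SW, SE, NE, NW corners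 $\mathbf{a},\mathbf{b},\mathbf{c},\mathbf{d}$: $A(\mathbf{a})+B(\mathbf{c})-A(\mathbf{b})-A(\mathbf{d})\ge0$, $B(\mathbf{a})+A(\mathbf{c})-A(\mathbf{b})-A(\mathbf{d})\ge0$, $B(\mathbf{a})+B(\mathbf{c})-B(\mathbf{b})-A(\mathbf{d})\ge0$, $B(\mathbf{a})+B(\mathbf{c})-A(\mathbf{b})-B(\mathbf{d})\ge0$; the imprecise copula on $[0,1]^2$ is defined identically with points in $[0,1]^2$. Copula on $[0,1]^2$: grounded, neutral element 1, $V_C\ge0$ on all rectangles. $Q^{\mathrm{BL}}$ is the function on $[0,1]^2$ equal on each cell $[\frac{i-1}{10},\frac{i}{10}]\times[\frac{j-1}{10},\frac{j}{10}]$ to the bilinear interpolation (affine in each variable separately) of the corner values of $Q$. *)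

(* Defs.v *)
From Stdlib Require Import Reals Lra List ZArith Arith.
Import ListNotations.
Open Scope R_scope.

(* A function on the mesh Delta = {0,1/10,...,1}^2 is encoded as
   Q : nat -> nat -> R, where Q i j stands for Q(i/10, j/10); only
   indices i, j <= 10 are meaningful. *)
Definition meshfun := nat -> nat -> R.

Definition Vd (Q : meshfun) (i1 i2 j1 j2 : nat) : R :=
  Q i1 j1 + Q i2 j2 - Q i2 j1 - Q i1 j2.

Definition d_grounded (Q : meshfun) : Prop :=
  forall i, (i <= 10)%nat -> Q i 0%nat = 0 /\ Q 0%nat i = 0.

Definition d_neutral (Q : meshfun) : Prop :=
  forall i, (i <= 10)%nat -> Q i 10%nat = INR i / 10 /\ Q 10%nat i = INR i / 10.

Definition discrete_copula (Q : meshfun) : Prop :=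
  d_grounded Q /\ d_neutral Q /\
  forall i1 i2 j1 j2, (i1 <= i2 <= 10)%nat -> (j1 <= j2 <= 10)%nat ->
    0 <= Vd Q i1 i2 j1 j2.

Definition discrete_quasi_copula (Q : meshfun) : Prop :=
  d_grounded Q /\ d_neutral Q /\
  forall i1 i2 j1 j2, (i1 <= i2 <= 10)%nat -> (j1 <= j2 <= 10)%nat ->
    (i1 = 0%nat \/ i2 = 10%nat \/ j1 = 0%nat \/ j2 = 10%nat) ->
    0 <= Vd Q i1 i2 j1 j2.

Definition minl (x : R) (l : list R) : R := fold_right Rmin x l.

(* D_nearrow(i,j): min of V_Q over rectangles with SW corner (i,j);
   the list starts with the degenerate rectangle (value 0). *)
Definition D_ne (Q : meshfun) (i j : nat) : R :=
  minl (Vd Q i i j j)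
    (map (fun p => Vd Q i (fst p) j (snd p))
         (list_prod (seq i (11 - i)) (seq j (11 - j)))).

Definition D_sw (Q : meshfun) (i j : nat) : R :=
  minl (Vd Q i i j j)
    (map (fun p => Vd Q (fst p) i (snd p) j)
         (list_prod (seq 0 (S i)) (seq 0 (S j)))).

Definition D_M (Q : meshfun) (i j : nat) : R := Rmin (D_ne Q i j) (D_sw Q i j).

Definition Q_M (Q : meshfun) : meshfun := fun i j => Q i j - D_M Q i j.

(* the four imprecise-copula inequalities for a rectangle with
   corners a=SW, b=SE, c=NE, d=NW given by their values *)
Definition imprecise_ineqs (Aa Ab Ac Ad Ba Bb Bc Bd : R) : Prop :=
  0 <= Aa + Bc - Ab - Ad /\
  0 <= Ba + Ac - Ab - Ad /\
  0 <= Ba + Bc - Bb - Ad /\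
  0 <= Ba + Bc - Ab - Bd.

Definition discrete_imprecise_copula (A B : meshfun) : Prop :=
  d_grounded A /\ d_neutral A /\ d_grounded B /\ d_neutral B /\
  forall i1 i2 j1 j2, (i1 <= i2 <= 10)%nat -> (j1 <= j2 <= 10)%nat ->
    imprecise_ineqs (A i1 j1) (A i2 j1) (A i2 j2) (A i1 j2)
                    (B i1 j1) (B i2 j1) (B i2 j2) (B i1 j2).

Definition unitI (s : R) : Prop := 0 <= s <= 1.

Definition grounded (C : R -> R -> R) : Prop :=
  forall s, unitI s -> C s 0 = 0 /\ C 0 s = 0.

Definition neutral (C : R -> R -> R) : Prop :=
  forall s, unitI s -> C s 1 = s /\ C 1 s = s.

Definition Vc (C : R -> R -> R) (s1 s2 t1 t2 : R) : R :=
  C s1 t1 + C s2 t2 - C s2 t1 - C s1 t2.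

Definition copula (C : R -> R -> R) : Prop :=
  grounded C /\ neutral C /\
  forall s1 s2 t1 t2, 0 <= s1 -> s1 <= s2 -> s2 <= 1 ->
    0 <= t1 -> t1 <= t2 -> t2 <= 1 -> 0 <= Vc C s1 s2 t1 t2.

Definition imprecise_copula (A B : R -> R -> R) : Prop :=
  grounded A /\ neutral A /\ grounded B /\ neutral B /\
  forall s1 s2 t1 t2, 0 <= s1 -> s1 <= s2 -> s2 <= 1 ->
    0 <= t1 -> t1 <= t2 -> t2 <= 1 ->
    imprecise_ineqs (A s1 t1) (A s2 t1) (A s2 t2) (A s1 t2)
                    (B s1 t1) (B s2 t1) (B s2 t2) (B s1 t2).

(* index k of the cell [k/10,(k+1)/10] (k = 0..9) containing s in [0,1];
   at interior mesh points either adjacent cell gives the same value. *)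
Definition cell (s : R) : nat := Nat.min 9 (Z.to_nat (Int_part (10 * s))).

Definition BL (Q : meshfun) (s t : R) : R :=
  let i := cell s in let j := cell t in
  let u := 10 * s - INR i in let v := 10 * t - INR j in
  (1 - u) * (1 - v) * Q i j + u * (1 - v) * Q (S i) j
  + (1 - u) * v * Q i (S j) + u * v * Q (S i) (S j).

Definition rowsA : list (list Z) := [
  [0;0;0;0;0;0;0;0;0;0;0];
  [0;0;1;2;3;4;5;5;5;5;5];
  [0;1;2;3;3;4;5;10;10;10;10];
  [0;2;2;5;7;7;8;13;15;15;15];
  [0;3;3;6;7;7;8;13;18;20;20];
  [0;4;4;6;9;11;11;16;21;25;25];
  [0;5;5;7;9;11;11;16;21;26;30];
  [0;5;10;12;14;16;16;21;26;31;35];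
  [0;5;10;15;19;21;21;26;31;36;40];
  [0;5;10;15;20;25;26;31;36;41;45];
  [0;5;10;15;20;25;30;35;40;45;50]]%Z.

Definition rowsB : list (list Z) := [
  [0;0;0;0;0;0;0;0;0;0;0];
  [0;1;2;3;4;5;5;5;5;5;5];
  [0;2;2;3;4;5;6;10;10;10;10];
  [0;3;3;6;7;8;9;14;15;15;15];
  [0;4;4;6;8;8;9;14;18;20;20];
  [0;5;5;7;9;11;12;17;22;25;25];
  [0;5;6;8;10;12;12;17;22;26;30];
  [0;5;10;13;15;17;17;22;27;31;35];
  [0;5;10;15;19;21;22;27;32;36;40];
  [0;5;10;15;20;25;26;31;36;41;45];
  [0;5;10;15;20;25;30;35;40;45;50]]%Z.

(* <A>(j/10,k/10) = [A]_{j+1,k+1} (0-based: row j, column k) *)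
Definition mA : meshfun := fun j k => IZR (nth k (nth j rowsA nil) 0%Z) / 50.
Definition mB : meshfun := fun j k => IZR (nth k (nth j rowsB nil) 0%Z) / 50.

(* Main.v *)
Require Import Defs.
From Stdlib Require Import Reals Lra Lia List ZArith Arith Bool.
Open Scope bool_scope.
Import ListNotations.
Open Scope R_scope.

Definition gA (i j : nat) : Z := nth j (nth i rowsA nil) 0%Z.
Definition gB (i j : nat) : Z := nth j (nth i rowsB nil) 0%Z.
Lemma mA_g i j : mA i j = IZR (gA i j) / 50. Proof. reflexivity. Qed.
Lemma mB_g i j : mB i j = IZR (gB i j) / 50. Proof. reflexivity. Qed.

Definition zV (g : nat -> nat -> Z) i1 i2 j1 j2 : Z :=
  (g i1 j1 + g i2 j2 - g i2 j1 - g i1 j2)%Z.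

Lemma Vd_g g i1 i2 j1 j2 :
  Vd (fun i j => IZR (g i j) / 50) i1 i2 j1 j2 = IZR (zV g i1 i2 j1 j2) / 50.
Proof. unfold Vd, zV. rewrite !minus_IZR, !plus_IZR. field. Qed.

Lemma IZR50_le x : (0 <= x)%Z -> 0 <= IZR x / 50.
Proof. intros. apply IZR_le in H. lra. Qed.

Definition s11 := seq 0 11.
Lemma in_s11 i : (i <= 10)%nat -> In i s11.
Proof. intros. unfold s11. apply in_seq. lia. Qed.

Lemma fa1 (P : nat -> bool) : forallb P s11 = true -> forall i, (i <= 10)%nat -> P i = true.
Proof. intros H i Hi. rewrite forallb_forall in H. apply H, in_s11, Hi. Qed.

Lemma fa2 (P : nat -> nat -> bool) :
  forallb (fun i => forallb (P i) s11) s11 = true ->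
  forall i j, (i <= 10)%nat -> (j <= 10)%nat -> P i j = true.
Proof. intros H i j Hi Hj. exact (fa1 _ (fa1 _ H i Hi) j Hj). Qed.

Lemma fa4 (P : nat -> nat -> nat -> nat -> bool) :
  forallb (fun a => forallb (fun b => forallb (fun c => forallb (P a b c) s11) s11) s11) s11 = true ->
  forall a b c d, (a <= 10)%nat -> (b <= 10)%nat -> (c <= 10)%nat -> (d <= 10)%nat -> P a b c d = true.
Proof.
  intros H a b c d Ha Hb Hc Hd.
  exact (fa1 _ (fa1 _ (fa1 _ (fa1 _ H a Ha) b Hb) c Hc) d Hd).
Qed.

Definition ground_b (g : nat -> nat -> Z) :=
  forallb (fun i => Z.eqb (g i 0%nat) 0 && Z.eqb (g 0%nat i) 0) s11.
Definition neutral_b (g : nat -> nat -> Z) :=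
  forallb (fun i => Z.eqb (g i 10%nat) (5 * Z.of_nat i) && Z.eqb (g 10%nat i) (5 * Z.of_nat i)) s11.

Lemma ground_ok g : ground_b g = true -> d_grounded (fun i j => IZR (g i j) / 50).
Proof.
  intros H i Hi. pose proof (fa1 _ H i Hi) as E. simpl in E.
  apply andb_prop in E as [E1 E2]. apply Z.eqb_eq in E1, E2.
  rewrite E1, E2. split; lra.
Qed.

Lemma neutral_ok g : neutral_b g = true -> d_neutral (fun i j => IZR (g i j) / 50).
Proof.
  intros H i Hi. pose proof (fa1 _ H i Hi) as E.
  apply andb_prop in E as [E1 E2]. apply Z.eqb_eq in E1, E2.
  cbv beta. rewrite E1, E2, mult_IZR, <- INR_IZR_INZ. split; field.
Qed.

Lemma gA_ground : ground_b gA = true. Proof. vm_compute. reflexivity. Qed.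
Lemma gB_ground : ground_b gB = true. Proof. vm_compute. reflexivity. Qed.
Lemma gA_neutral : neutral_b gA = true. Proof. vm_compute. reflexivity. Qed.
Lemma gB_neutral : neutral_b gB = true. Proof. vm_compute. reflexivity. Qed.

Definition qc_b :=
  forallb (fun a => forallb (fun b => forallb (fun c => forallb (fun d =>
    implb ((a <=? b)%nat && (c <=? d)%nat &&
           ((a =? 0)%nat || (b =? 10)%nat || (c =? 0)%nat || (d =? 10)%nat))
          (Z.leb 0 (zV gA a b c d))) s11) s11) s11) s11.
Lemma qc_b_ok : qc_b = true. Proof. vm_compute. reflexivity. Qed.
Definition qcP a b c d := implb ((a <=? b)%nat && (c <=? d)%nat &&
           ((a =? 0)%nat || (b =? 10)%nat || (c =? 0)%nat || (d =? 10)%nat))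
          (Z.leb 0 (zV gA a b c d)).

Lemma part_qc : discrete_quasi_copula mA.
Proof.
  split; [exact (ground_ok _ gA_ground)|].
  split; [exact (neutral_ok _ gA_neutral)|].
  intros a b c d Hab Hcd Hor.
  pose proof (fa4 qcP qc_b_ok a b c d ltac:(lia) ltac:(lia) ltac:(lia) ltac:(lia)) as E.
  change mA with (fun i j => IZR (gA i j) / 50). rewrite Vd_g. apply IZR50_le.
  assert (Hc : ((a <=? b)%nat && (c <=? d)%nat &&
           ((a =? 0)%nat || (b =? 10)%nat || (c =? 0)%nat || (d =? 10)%nat)) = true).
  { apply andb_true_intro; split; [apply andb_true_intro; split; apply Nat.leb_le; lia|].
    destruct Hor as [H|[H|[H|H]]]; subst; rewrite ?Nat.eqb_refl, ?orb_true_r; reflexivity. }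
  unfold qcP in E. rewrite Hc in E. simpl in E. apply Z.leb_le, E.
Qed.

Definition imp_b :=
  forallb (fun a => forallb (fun b => forallb (fun c => forallb (fun d =>
    implb ((a <=? b)%nat && (c <=? d)%nat)
     (Z.leb 0 (gA a c + gB b d - gA b c - gA a d) &&
      Z.leb 0 (gB a c + gA b d - gA b c - gA a d) &&
      Z.leb 0 (gB a c + gB b d - gB b c - gA a d) &&
      Z.leb 0 (gB a c + gB b d - gA b c - gB a d))%Z) s11) s11) s11) s11.
Lemma imp_b_ok : imp_b = true. Proof. vm_compute. reflexivity. Qed.
Definition impP a b c d :=     implb ((a <=? b)%nat && (c <=? d)%nat)
     (Z.leb 0 (gA a c + gB b d - gA b c - gA a d) &&
      Z.leb 0 (gB a c + gA b d - gA b c - gA a d) &&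
      Z.leb 0 (gB a c + gB b d - gB b c - gA a d) &&
      Z.leb 0 (gB a c + gB b d - gA b c - gB a d))%Z.

Lemma part_imp : discrete_imprecise_copula mA mB.
Proof.
  split; [exact (ground_ok _ gA_ground)|].
  split; [exact (neutral_ok _ gA_neutral)|].
  split; [exact (ground_ok _ gB_ground)|].
  split; [exact (neutral_ok _ gB_neutral)|].
  intros a b c d Hab Hcd.
  pose proof (fa4 impP imp_b_ok a b c d ltac:(lia) ltac:(lia) ltac:(lia) ltac:(lia)) as E.
  assert (Hc : ((a <=? b)%nat && (c <=? d)%nat) = true).
  { apply andb_true_intro; split; apply Nat.leb_le; lia. }
  unfold impP in E. rewrite Hc in E. cbn [implb] in E.
  repeat rewrite andb_true_iff in E. destruct E as [[[E1 E2] E3] E4].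
  apply Z.leb_le in E1, E2, E3, E4.
  apply IZR_le in E1, E2, E3, E4.
  rewrite !minus_IZR, !plus_IZR in E1, E2, E3, E4.
  rewrite !mA_g, !mB_g. unfold imprecise_ineqs. repeat split; lra.
Qed.

Lemma Rmin_IZR x y : Rmin (IZR x / 50) (IZR y / 50) = IZR (Z.min x y) / 50.
Proof.
  destruct (Z.min_spec x y) as [[H E]|[H E]]; rewrite E.
  - apply Rmin_left. apply IZR_lt in H. lra.
  - apply Rmin_right. apply IZR_le in H. lra.
Qed.

Lemma minl_IZR {X} x (f : X -> Z) l :
  minl (IZR x / 50) (map (fun p => IZR (f p) / 50) l) = IZR (fold_right Z.min x (map f l)) / 50.
Proof.
  induction l; simpl; [reflexivity|].
  unfold minl in *. simpl. rewrite IHl. apply Rmin_IZR.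
Qed.

Definition zDne i j := fold_right Z.min (zV gA i i j j)
    (map (fun p => zV gA i (fst p) j (snd p)) (list_prod (seq i (11 - i)) (seq j (11 - j)))).
Definition zDsw i j := fold_right Z.min (zV gA i i j j)
    (map (fun p => zV gA (fst p) i (snd p) j) (list_prod (seq 0 (S i)) (seq 0 (S j)))).

Lemma Dne_z i j : D_ne mA i j = IZR (zDne i j) / 50.
Proof.
  unfold D_ne, zDne. change mA with (fun i j => IZR (gA i j) / 50).
  rewrite Vd_g. erewrite map_ext by (intro; apply Vd_g). apply minl_IZR.
Qed.
Lemma Dsw_z i j : D_sw mA i j = IZR (zDsw i j) / 50.
Proof.
  unfold D_sw, zDsw. change mA with (fun i j => IZR (gA i j) / 50).
  rewrite Vd_g. erewrite map_ext by (intro; apply Vd_g). apply minl_IZR.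
Qed.

Definition qm_b := forallb (fun i => forallb (fun j =>
   Z.eqb (gB i j) (gA i j - Z.min (zDne i j) (zDsw i j))) s11) s11.
Lemma qm_b_ok : qm_b = true. Proof. vm_compute. reflexivity. Qed.

Lemma part_qm : forall i j, (i <= 10)%nat -> (j <= 10)%nat -> mB i j = Q_M mA i j.
Proof.
  intros i j Hi Hj. pose proof (fa2 (fun i j => Z.eqb (gB i j) (gA i j - Z.min (zDne i j) (zDsw i j))) qm_b_ok i j Hi Hj) as E. simpl in E.
  apply Z.eqb_eq in E.
  unfold Q_M, D_M. rewrite Dne_z, Dsw_z, Rmin_IZR, mA_g, mB_g, E, minus_IZR. field.
Qed.
Lemma part_nodisc : ~ (exists C : meshfun, discrete_copula C /\
       forall i j, (i <= 10)%nat -> (j <= 10)%nat -> mA i j <= C i j <= mB i j).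
Proof.
  intros [C [[_ [_ Hr]] Hb]].
  pose proof (Hb 0%nat 0%nat ltac:(lia) ltac:(lia)) as b0_0.
  pose proof (Hb 0%nat 1%nat ltac:(lia) ltac:(lia)) as b0_1.
  pose proof (Hb 0%nat 2%nat ltac:(lia) ltac:(lia)) as b0_2.
  pose proof (Hb 0%nat 3%nat ltac:(lia) ltac:(lia)) as b0_3.
  pose proof (Hb 0%nat 4%nat ltac:(lia) ltac:(lia)) as b0_4.
  pose proof (Hb 0%nat 5%nat ltac:(lia) ltac:(lia)) as b0_5.
  pose proof (Hb 0%nat 6%nat ltac:(lia) ltac:(lia)) as b0_6.
  pose proof (Hb 0%nat 7%nat ltac:(lia) ltac:(lia)) as b0_7.
  pose proof (Hb 0%nat 8%nat ltac:(lia) ltac:(lia)) as b0_8.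
  pose proof (Hb 0%nat 9%nat ltac:(lia) ltac:(lia)) as b0_9.
  pose proof (Hb 0%nat 10%nat ltac:(lia) ltac:(lia)) as b0_10.
  pose proof (Hb 1%nat 0%nat ltac:(lia) ltac:(lia)) as b1_0.
  pose proof (Hb 1%nat 1%nat ltac:(lia) ltac:(lia)) as b1_1.
  pose proof (Hb 1%nat 2%nat ltac:(lia) ltac:(lia)) as b1_2.
  pose proof (Hb 1%nat 3%nat ltac:(lia) ltac:(lia)) as b1_3.
  pose proof (Hb 1%nat 4%nat ltac:(lia) ltac:(lia)) as b1_4.
  pose proof (Hb 1%nat 5%nat ltac:(lia) ltac:(lia)) as b1_5.
  pose proof (Hb 1%nat 6%nat ltac:(lia) ltac:(lia)) as b1_6.
  pose proof (Hb 1%nat 7%nat ltac:(lia) ltac:(lia)) as b1_7.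
  pose proof (Hb 1%nat 8%nat ltac:(lia) ltac:(lia)) as b1_8.
  pose proof (Hb 1%nat 9%nat ltac:(lia) ltac:(lia)) as b1_9.
  pose proof (Hb 1%nat 10%nat ltac:(lia) ltac:(lia)) as b1_10.
  pose proof (Hb 2%nat 0%nat ltac:(lia) ltac:(lia)) as b2_0.
  pose proof (Hb 2%nat 1%nat ltac:(lia) ltac:(lia)) as b2_1.
  pose proof (Hb 2%nat 2%nat ltac:(lia) ltac:(lia)) as b2_2.
  pose proof (Hb 2%nat 3%nat ltac:(lia) ltac:(lia)) as b2_3.
  pose proof (Hb 2%nat 4%nat ltac:(lia) ltac:(lia)) as b2_4.
  pose proof (Hb 2%nat 5%nat ltac:(lia) ltac:(lia)) as b2_5.
  pose proof (Hb 2%nat 6%nat ltac:(lia) ltac:(lia)) as b2_6.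
  pose proof (Hb 2%nat 7%nat ltac:(lia) ltac:(lia)) as b2_7.
  pose proof (Hb 2%nat 8%nat ltac:(lia) ltac:(lia)) as b2_8.
  pose proof (Hb 2%nat 9%nat ltac:(lia) ltac:(lia)) as b2_9.
  pose proof (Hb 2%nat 10%nat ltac:(lia) ltac:(lia)) as b2_10.
  pose proof (Hb 3%nat 0%nat ltac:(lia) ltac:(lia)) as b3_0.
  pose proof (Hb 3%nat 1%nat ltac:(lia) ltac:(lia)) as b3_1.
  pose proof (Hb 3%nat 2%nat ltac:(lia) ltac:(lia)) as b3_2.
  pose proof (Hb 3%nat 3%nat ltac:(lia) ltac:(lia)) as b3_3.
  pose proof (Hb 3%nat 4%nat ltac:(lia) ltac:(lia)) as b3_4.
  pose proof (Hb 3%nat 5%nat ltac:(lia) ltac:(lia)) as b3_5.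
  pose proof (Hb 3%nat 6%nat ltac:(lia) ltac:(lia)) as b3_6.
  pose proof (Hb 3%nat 7%nat ltac:(lia) ltac:(lia)) as b3_7.
  pose proof (Hb 3%nat 8%nat ltac:(lia) ltac:(lia)) as b3_8.
  pose proof (Hb 3%nat 9%nat ltac:(lia) ltac:(lia)) as b3_9.
  pose proof (Hb 3%nat 10%nat ltac:(lia) ltac:(lia)) as b3_10.
  pose proof (Hb 4%nat 0%nat ltac:(lia) ltac:(lia)) as b4_0.
  pose proof (Hb 4%nat 1%nat ltac:(lia) ltac:(lia)) as b4_1.
  pose proof (Hb 4%nat 2%nat ltac:(lia) ltac:(lia)) as b4_2.
  pose proof (Hb 4%nat 3%nat ltac:(lia) ltac:(lia)) as b4_3.
  pose proof (Hb 4%nat 4%nat ltac:(lia) ltac:(lia)) as b4_4.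
  pose proof (Hb 4%nat 5%nat ltac:(lia) ltac:(lia)) as b4_5.
  pose proof (Hb 4%nat 6%nat ltac:(lia) ltac:(lia)) as b4_6.
  pose proof (Hb 4%nat 7%nat ltac:(lia) ltac:(lia)) as b4_7.
  pose proof (Hb 4%nat 8%nat ltac:(lia) ltac:(lia)) as b4_8.
  pose proof (Hb 4%nat 9%nat ltac:(lia) ltac:(lia)) as b4_9.
  pose proof (Hb 4%nat 10%nat ltac:(lia) ltac:(lia)) as b4_10.
  pose proof (Hb 5%nat 0%nat ltac:(lia) ltac:(lia)) as b5_0.
  pose proof (Hb 5%nat 1%nat ltac:(lia) ltac:(lia)) as b5_1.
  pose proof (Hb 5%nat 2%nat ltac:(lia) ltac:(lia)) as b5_2.
  pose proof (Hb 5%nat 3%nat ltac:(lia) ltac:(lia)) as b5_3.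
  pose proof (Hb 5%nat 4%nat ltac:(lia) ltac:(lia)) as b5_4.
  pose proof (Hb 5%nat 5%nat ltac:(lia) ltac:(lia)) as b5_5.
  pose proof (Hb 5%nat 6%nat ltac:(lia) ltac:(lia)) as b5_6.
  pose proof (Hb 5%nat 7%nat ltac:(lia) ltac:(lia)) as b5_7.
  pose proof (Hb 5%nat 8%nat ltac:(lia) ltac:(lia)) as b5_8.
  pose proof (Hb 5%nat 9%nat ltac:(lia) ltac:(lia)) as b5_9.
  pose proof (Hb 5%nat 10%nat ltac:(lia) ltac:(lia)) as b5_10.
  pose proof (Hb 6%nat 0%nat ltac:(lia) ltac:(lia)) as b6_0.
  pose proof (Hb 6%nat 1%nat ltac:(lia) ltac:(lia)) as b6_1.
  pose proof (Hb 6%nat 2%nat ltac:(lia) ltac:(lia)) as b6_2.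
  pose proof (Hb 6%nat 3%nat ltac:(lia) ltac:(lia)) as b6_3.
  pose proof (Hb 6%nat 4%nat ltac:(lia) ltac:(lia)) as b6_4.
  pose proof (Hb 6%nat 5%nat ltac:(lia) ltac:(lia)) as b6_5.
  pose proof (Hb 6%nat 6%nat ltac:(lia) ltac:(lia)) as b6_6.
  pose proof (Hb 6%nat 7%nat ltac:(lia) ltac:(lia)) as b6_7.
  pose proof (Hb 6%nat 8%nat ltac:(lia) ltac:(lia)) as b6_8.
  pose proof (Hb 6%nat 9%nat ltac:(lia) ltac:(lia)) as b6_9.
  pose proof (Hb 6%nat 10%nat ltac:(lia) ltac:(lia)) as b6_10.
  pose proof (Hb 7%nat 0%nat ltac:(lia) ltac:(lia)) as b7_0.
  pose proof (Hb 7%nat 1%nat ltac:(lia) ltac:(lia)) as b7_1.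
  pose proof (Hb 7%nat 2%nat ltac:(lia) ltac:(lia)) as b7_2.
  pose proof (Hb 7%nat 3%nat ltac:(lia) ltac:(lia)) as b7_3.
  pose proof (Hb 7%nat 4%nat ltac:(lia) ltac:(lia)) as b7_4.
  pose proof (Hb 7%nat 5%nat ltac:(lia) ltac:(lia)) as b7_5.
  pose proof (Hb 7%nat 6%nat ltac:(lia) ltac:(lia)) as b7_6.
  pose proof (Hb 7%nat 7%nat ltac:(lia) ltac:(lia)) as b7_7.
  pose proof (Hb 7%nat 8%nat ltac:(lia) ltac:(lia)) as b7_8.
  pose proof (Hb 7%nat 9%nat ltac:(lia) ltac:(lia)) as b7_9.
  pose proof (Hb 7%nat 10%nat ltac:(lia) ltac:(lia)) as b7_10.
  pose proof (Hb 8%nat 0%nat ltac:(lia) ltac:(lia)) as b8_0.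
  pose proof (Hb 8%nat 1%nat ltac:(lia) ltac:(lia)) as b8_1.
  pose proof (Hb 8%nat 2%nat ltac:(lia) ltac:(lia)) as b8_2.
  pose proof (Hb 8%nat 3%nat ltac:(lia) ltac:(lia)) as b8_3.
  pose proof (Hb 8%nat 4%nat ltac:(lia) ltac:(lia)) as b8_4.
  pose proof (Hb 8%nat 5%nat ltac:(lia) ltac:(lia)) as b8_5.
  pose proof (Hb 8%nat 6%nat ltac:(lia) ltac:(lia)) as b8_6.
  pose proof (Hb 8%nat 7%nat ltac:(lia) ltac:(lia)) as b8_7.
  pose proof (Hb 8%nat 8%nat ltac:(lia) ltac:(lia)) as b8_8.
  pose proof (Hb 8%nat 9%nat ltac:(lia) ltac:(lia)) as b8_9.
  pose proof (Hb 8%nat 10%nat ltac:(lia) ltac:(lia)) as b8_10.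
  pose proof (Hb 9%nat 0%nat ltac:(lia) ltac:(lia)) as b9_0.
  pose proof (Hb 9%nat 1%nat ltac:(lia) ltac:(lia)) as b9_1.
  pose proof (Hb 9%nat 2%nat ltac:(lia) ltac:(lia)) as b9_2.
  pose proof (Hb 9%nat 3%nat ltac:(lia) ltac:(lia)) as b9_3.
  pose proof (Hb 9%nat 4%nat ltac:(lia) ltac:(lia)) as b9_4.
  pose proof (Hb 9%nat 5%nat ltac:(lia) ltac:(lia)) as b9_5.
  pose proof (Hb 9%nat 6%nat ltac:(lia) ltac:(lia)) as b9_6.
  pose proof (Hb 9%nat 7%nat ltac:(lia) ltac:(lia)) as b9_7.
  pose proof (Hb 9%nat 8%nat ltac:(lia) ltac:(lia)) as b9_8.
  pose proof (Hb 9%nat 9%nat ltac:(lia) ltac:(lia)) as b9_9.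
  pose proof (Hb 9%nat 10%nat ltac:(lia) ltac:(lia)) as b9_10.
  pose proof (Hb 10%nat 0%nat ltac:(lia) ltac:(lia)) as b10_0.
  pose proof (Hb 10%nat 1%nat ltac:(lia) ltac:(lia)) as b10_1.
  pose proof (Hb 10%nat 2%nat ltac:(lia) ltac:(lia)) as b10_2.
  pose proof (Hb 10%nat 3%nat ltac:(lia) ltac:(lia)) as b10_3.
  pose proof (Hb 10%nat 4%nat ltac:(lia) ltac:(lia)) as b10_4.
  pose proof (Hb 10%nat 5%nat ltac:(lia) ltac:(lia)) as b10_5.
  pose proof (Hb 10%nat 6%nat ltac:(lia) ltac:(lia)) as b10_6.
  pose proof (Hb 10%nat 7%nat ltac:(lia) ltac:(lia)) as b10_7.
  pose proof (Hb 10%nat 8%nat ltac:(lia) ltac:(lia)) as b10_8.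
  pose proof (Hb 10%nat 9%nat ltac:(lia) ltac:(lia)) as b10_9.
  pose proof (Hb 10%nat 10%nat ltac:(lia) ltac:(lia)) as b10_10.
  pose proof (Hr 0%nat 1%nat 0%nat 1%nat ltac:(lia) ltac:(lia)) as r0_0.
  pose proof (Hr 0%nat 1%nat 1%nat 2%nat ltac:(lia) ltac:(lia)) as r0_1.
  pose proof (Hr 0%nat 1%nat 2%nat 3%nat ltac:(lia) ltac:(lia)) as r0_2.
  pose proof (Hr 0%nat 1%nat 3%nat 4%nat ltac:(lia) ltac:(lia)) as r0_3.
  pose proof (Hr 0%nat 1%nat 4%nat 5%nat ltac:(lia) ltac:(lia)) as r0_4.
  pose proof (Hr 0%nat 1%nat 5%nat 6%nat ltac:(lia) ltac:(lia)) as r0_5.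
  pose proof (Hr 0%nat 1%nat 6%nat 7%nat ltac:(lia) ltac:(lia)) as r0_6.
  pose proof (Hr 0%nat 1%nat 7%nat 8%nat ltac:(lia) ltac:(lia)) as r0_7.
  pose proof (Hr 0%nat 1%nat 8%nat 9%nat ltac:(lia) ltac:(lia)) as r0_8.
  pose proof (Hr 0%nat 1%nat 9%nat 10%nat ltac:(lia) ltac:(lia)) as r0_9.
  pose proof (Hr 1%nat 2%nat 0%nat 1%nat ltac:(lia) ltac:(lia)) as r1_0.
  pose proof (Hr 1%nat 2%nat 1%nat 2%nat ltac:(lia) ltac:(lia)) as r1_1.
  pose proof (Hr 1%nat 2%nat 2%nat 3%nat ltac:(lia) ltac:(lia)) as r1_2.
  pose proof (Hr 1%nat 2%nat 3%nat 4%nat ltac:(lia) ltac:(lia)) as r1_3.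
  pose proof (Hr 1%nat 2%nat 4%nat 5%nat ltac:(lia) ltac:(lia)) as r1_4.
  pose proof (Hr 1%nat 2%nat 5%nat 6%nat ltac:(lia) ltac:(lia)) as r1_5.
  pose proof (Hr 1%nat 2%nat 6%nat 7%nat ltac:(lia) ltac:(lia)) as r1_6.
  pose proof (Hr 1%nat 2%nat 7%nat 8%nat ltac:(lia) ltac:(lia)) as r1_7.
  pose proof (Hr 1%nat 2%nat 8%nat 9%nat ltac:(lia) ltac:(lia)) as r1_8.
  pose proof (Hr 1%nat 2%nat 9%nat 10%nat ltac:(lia) ltac:(lia)) as r1_9.
  pose proof (Hr 2%nat 3%nat 0%nat 1%nat ltac:(lia) ltac:(lia)) as r2_0.
  pose proof (Hr 2%nat 3%nat 1%nat 2%nat ltac:(lia) ltac:(lia)) as r2_1.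
  pose proof (Hr 2%nat 3%nat 2%nat 3%nat ltac:(lia) ltac:(lia)) as r2_2.
  pose proof (Hr 2%nat 3%nat 3%nat 4%nat ltac:(lia) ltac:(lia)) as r2_3.
  pose proof (Hr 2%nat 3%nat 4%nat 5%nat ltac:(lia) ltac:(lia)) as r2_4.
  pose proof (Hr 2%nat 3%nat 5%nat 6%nat ltac:(lia) ltac:(lia)) as r2_5.
  pose proof (Hr 2%nat 3%nat 6%nat 7%nat ltac:(lia) ltac:(lia)) as r2_6.
  pose proof (Hr 2%nat 3%nat 7%nat 8%nat ltac:(lia) ltac:(lia)) as r2_7.
  pose proof (Hr 2%nat 3%nat 8%nat 9%nat ltac:(lia) ltac:(lia)) as r2_8.
  pose proof (Hr 2%nat 3%nat 9%nat 10%nat ltac:(lia) ltac:(lia)) as r2_9.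
  pose proof (Hr 3%nat 4%nat 0%nat 1%nat ltac:(lia) ltac:(lia)) as r3_0.
  pose proof (Hr 3%nat 4%nat 1%nat 2%nat ltac:(lia) ltac:(lia)) as r3_1.
  pose proof (Hr 3%nat 4%nat 2%nat 3%nat ltac:(lia) ltac:(lia)) as r3_2.
  pose proof (Hr 3%nat 4%nat 3%nat 4%nat ltac:(lia) ltac:(lia)) as r3_3.
  pose proof (Hr 3%nat 4%nat 4%nat 5%nat ltac:(lia) ltac:(lia)) as r3_4.
  pose proof (Hr 3%nat 4%nat 5%nat 6%nat ltac:(lia) ltac:(lia)) as r3_5.
  pose proof (Hr 3%nat 4%nat 6%nat 7%nat ltac:(lia) ltac:(lia)) as r3_6.
  pose proof (Hr 3%nat 4%nat 7%nat 8%nat ltac:(lia) ltac:(lia)) as r3_7.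
  pose proof (Hr 3%nat 4%nat 8%nat 9%nat ltac:(lia) ltac:(lia)) as r3_8.
  pose proof (Hr 3%nat 4%nat 9%nat 10%nat ltac:(lia) ltac:(lia)) as r3_9.
  pose proof (Hr 4%nat 5%nat 0%nat 1%nat ltac:(lia) ltac:(lia)) as r4_0.
  pose proof (Hr 4%nat 5%nat 1%nat 2%nat ltac:(lia) ltac:(lia)) as r4_1.
  pose proof (Hr 4%nat 5%nat 2%nat 3%nat ltac:(lia) ltac:(lia)) as r4_2.
  pose proof (Hr 4%nat 5%nat 3%nat 4%nat ltac:(lia) ltac:(lia)) as r4_3.
  pose proof (Hr 4%nat 5%nat 4%nat 5%nat ltac:(lia) ltac:(lia)) as r4_4.
  pose proof (Hr 4%nat 5%nat 5%nat 6%nat ltac:(lia) ltac:(lia)) as r4_5.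
  pose proof (Hr 4%nat 5%nat 6%nat 7%nat ltac:(lia) ltac:(lia)) as r4_6.
  pose proof (Hr 4%nat 5%nat 7%nat 8%nat ltac:(lia) ltac:(lia)) as r4_7.
  pose proof (Hr 4%nat 5%nat 8%nat 9%nat ltac:(lia) ltac:(lia)) as r4_8.
  pose proof (Hr 4%nat 5%nat 9%nat 10%nat ltac:(lia) ltac:(lia)) as r4_9.
  pose proof (Hr 5%nat 6%nat 0%nat 1%nat ltac:(lia) ltac:(lia)) as r5_0.
  pose proof (Hr 5%nat 6%nat 1%nat 2%nat ltac:(lia) ltac:(lia)) as r5_1.
  pose proof (Hr 5%nat 6%nat 2%nat 3%nat ltac:(lia) ltac:(lia)) as r5_2.
  pose proof (Hr 5%nat 6%nat 3%nat 4%nat ltac:(lia) ltac:(lia)) as r5_3.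
  pose proof (Hr 5%nat 6%nat 4%nat 5%nat ltac:(lia) ltac:(lia)) as r5_4.
  pose proof (Hr 5%nat 6%nat 5%nat 6%nat ltac:(lia) ltac:(lia)) as r5_5.
  pose proof (Hr 5%nat 6%nat 6%nat 7%nat ltac:(lia) ltac:(lia)) as r5_6.
  pose proof (Hr 5%nat 6%nat 7%nat 8%nat ltac:(lia) ltac:(lia)) as r5_7.
  pose proof (Hr 5%nat 6%nat 8%nat 9%nat ltac:(lia) ltac:(lia)) as r5_8.
  pose proof (Hr 5%nat 6%nat 9%nat 10%nat ltac:(lia) ltac:(lia)) as r5_9.
  pose proof (Hr 6%nat 7%nat 0%nat 1%nat ltac:(lia) ltac:(lia)) as r6_0.
  pose proof (Hr 6%nat 7%nat 1%nat 2%nat ltac:(lia) ltac:(lia)) as r6_1.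
  pose proof (Hr 6%nat 7%nat 2%nat 3%nat ltac:(lia) ltac:(lia)) as r6_2.
  pose proof (Hr 6%nat 7%nat 3%nat 4%nat ltac:(lia) ltac:(lia)) as r6_3.
  pose proof (Hr 6%nat 7%nat 4%nat 5%nat ltac:(lia) ltac:(lia)) as r6_4.
  pose proof (Hr 6%nat 7%nat 5%nat 6%nat ltac:(lia) ltac:(lia)) as r6_5.
  pose proof (Hr 6%nat 7%nat 6%nat 7%nat ltac:(lia) ltac:(lia)) as r6_6.
  pose proof (Hr 6%nat 7%nat 7%nat 8%nat ltac:(lia) ltac:(lia)) as r6_7.
  pose proof (Hr 6%nat 7%nat 8%nat 9%nat ltac:(lia) ltac:(lia)) as r6_8.
  pose proof (Hr 6%nat 7%nat 9%nat 10%nat ltac:(lia) ltac:(lia)) as r6_9.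
  pose proof (Hr 7%nat 8%nat 0%nat 1%nat ltac:(lia) ltac:(lia)) as r7_0.
  pose proof (Hr 7%nat 8%nat 1%nat 2%nat ltac:(lia) ltac:(lia)) as r7_1.
  pose proof (Hr 7%nat 8%nat 2%nat 3%nat ltac:(lia) ltac:(lia)) as r7_2.
  pose proof (Hr 7%nat 8%nat 3%nat 4%nat ltac:(lia) ltac:(lia)) as r7_3.
  pose proof (Hr 7%nat 8%nat 4%nat 5%nat ltac:(lia) ltac:(lia)) as r7_4.
  pose proof (Hr 7%nat 8%nat 5%nat 6%nat ltac:(lia) ltac:(lia)) as r7_5.
  pose proof (Hr 7%nat 8%nat 6%nat 7%nat ltac:(lia) ltac:(lia)) as r7_6.
  pose proof (Hr 7%nat 8%nat 7%nat 8%nat ltac:(lia) ltac:(lia)) as r7_7.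
  pose proof (Hr 7%nat 8%nat 8%nat 9%nat ltac:(lia) ltac:(lia)) as r7_8.
  pose proof (Hr 7%nat 8%nat 9%nat 10%nat ltac:(lia) ltac:(lia)) as r7_9.
  pose proof (Hr 8%nat 9%nat 0%nat 1%nat ltac:(lia) ltac:(lia)) as r8_0.
  pose proof (Hr 8%nat 9%nat 1%nat 2%nat ltac:(lia) ltac:(lia)) as r8_1.
  pose proof (Hr 8%nat 9%nat 2%nat 3%nat ltac:(lia) ltac:(lia)) as r8_2.
  pose proof (Hr 8%nat 9%nat 3%nat 4%nat ltac:(lia) ltac:(lia)) as r8_3.
  pose proof (Hr 8%nat 9%nat 4%nat 5%nat ltac:(lia) ltac:(lia)) as r8_4.
  pose proof (Hr 8%nat 9%nat 5%nat 6%nat ltac:(lia) ltac:(lia)) as r8_5.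
  pose proof (Hr 8%nat 9%nat 6%nat 7%nat ltac:(lia) ltac:(lia)) as r8_6.
  pose proof (Hr 8%nat 9%nat 7%nat 8%nat ltac:(lia) ltac:(lia)) as r8_7.
  pose proof (Hr 8%nat 9%nat 8%nat 9%nat ltac:(lia) ltac:(lia)) as r8_8.
  pose proof (Hr 8%nat 9%nat 9%nat 10%nat ltac:(lia) ltac:(lia)) as r8_9.
  pose proof (Hr 9%nat 10%nat 0%nat 1%nat ltac:(lia) ltac:(lia)) as r9_0.
  pose proof (Hr 9%nat 10%nat 1%nat 2%nat ltac:(lia) ltac:(lia)) as r9_1.
  pose proof (Hr 9%nat 10%nat 2%nat 3%nat ltac:(lia) ltac:(lia)) as r9_2.
  pose proof (Hr 9%nat 10%nat 3%nat 4%nat ltac:(lia) ltac:(lia)) as r9_3.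
  pose proof (Hr 9%nat 10%nat 4%nat 5%nat ltac:(lia) ltac:(lia)) as r9_4.
  pose proof (Hr 9%nat 10%nat 5%nat 6%nat ltac:(lia) ltac:(lia)) as r9_5.
  pose proof (Hr 9%nat 10%nat 6%nat 7%nat ltac:(lia) ltac:(lia)) as r9_6.
  pose proof (Hr 9%nat 10%nat 7%nat 8%nat ltac:(lia) ltac:(lia)) as r9_7.
  pose proof (Hr 9%nat 10%nat 8%nat 9%nat ltac:(lia) ltac:(lia)) as r9_8.
  pose proof (Hr 9%nat 10%nat 9%nat 10%nat ltac:(lia) ltac:(lia)) as r9_9.
  clear Hb Hr. cbv [mA mB List.nth rowsA rowsB] in *. unfold Vd in *. lra.
Qed.

Lemma cell_spec s : 0 <= s <= 1 -> (cell s <= 9)%nat /\ INR (cell s) <= 10 * s <= INR (cell s) + 1.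
Proof.
  intros Hs. unfold cell.
  destruct (base_Int_part (10 * s)) as [H1 H2].
  set (z := Int_part (10 * s)) in *.
  assert (Hz0 : (0 <= z)%Z). { apply le_IZR. assert (IZR z > -1) by lra.
    apply lt_IZR in H. simpl. apply IZR_le. lia. }
  assert (Hz1 : (z <= 10)%Z). { apply le_IZR. lra. }
  destruct (Nat.min_spec 9 (Z.to_nat z)) as [[Hlt E]|[Hge E]]; rewrite E.
  - split; [lia|]. assert (z = 10%Z) by lia. subst z. rewrite H in H1.
    simpl. lra.
  - split; [exact Hge|]. rewrite INR_IZR_INZ, Z2Nat.id by lia. lra.
Qed.

Definition F (Q : meshfun) (i j : nat) (s t : R) : R :=
  let u := 10 * s - INR i in let v := 10 * t - INR j in
  (1 - u) * (1 - v) * Q i j + u * (1 - v) * Q (S i) j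
  + (1 - u) * v * Q i (S j) + u * v * Q (S i) (S j).

Lemma BL_F Q s t : BL Q s t = F Q (cell s) (cell t) s t.
Proof. reflexivity. Qed.

Lemma near_nat k k' x : INR k <= x <= INR k + 1 -> INR k' <= x <= INR k' + 1 ->
  k = k' \/ (k' = S k /\ x = INR k') \/ (k = S k' /\ x = INR k).
Proof.
  intros H H'.
  assert (A1 : (k <= k' + 1)%nat).
  { destruct (le_lt_dec k (k' + 1)) as [h|h]; [exact h|].
    apply le_INR in h. rewrite S_INR, plus_INR in h. simpl in h. lra. }
  assert (A2 : (k' <= k + 1)%nat).
  { destruct (le_lt_dec k' (k + 1)) as [h|h]; [exact h|].
    apply le_INR in h. rewrite S_INR, plus_INR in h. simpl in h. lra. }
  destruct (Nat.eq_dec k k') as [e|ne]; [left; exact e|right].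
  assert (k' = S k \/ k = S k') as [e|e] by lia; subst.
  - left. split; [reflexivity|]. rewrite S_INR in *. lra.
  - right. split; [reflexivity|]. rewrite S_INR in *. lra.
Qed.

Lemma F_sw_i Q k k' j s t : INR k <= 10 * s <= INR k + 1 -> INR k' <= 10 * s <= INR k' + 1 ->
  F Q k j s t = F Q k' j s t.
Proof.
  intros H H'. destruct (near_nat k k' (10 * s) H H') as [e|[[e1 e2]|[e1 e2]]]; subst.
  - reflexivity.
  - unfold F; cbv zeta. rewrite e2. rewrite S_INR. ring.
  - unfold F; cbv zeta. rewrite e2. rewrite S_INR. ring.
Qed.

Lemma F_sw_j Q i l l' s t : INR l <= 10 * t <= INR l + 1 -> INR l' <= 10 * t <= INR l' + 1 ->
  F Q i l s t = F Q i l' s t.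
Proof.
  intros H H'. destruct (near_nat l l' (10 * t) H H') as [e|[[e1 e2]|[e1 e2]]]; subst.
  - reflexivity.
  - unfold F; cbv zeta. rewrite e2. rewrite S_INR. ring.
  - unfold F; cbv zeta. rewrite e2. rewrite S_INR. ring.
Qed.

Lemma INR9 : INR 9 = 9. Proof. simpl. ring. Qed.
Lemma INR10 : INR 10 = 10. Proof. simpl. ring. Qed.

Lemma br_unit k x : (k <= 9)%nat -> INR k <= 10 * x <= INR k + 1 -> 0 <= x <= 1.
Proof.
  intros Hk Hx. apply le_INR in Hk. rewrite INR9 in Hk. pose proof (pos_INR k). lra.
Qed.

Lemma BL_any Q s t k l : (k <= 9)%nat -> (l <= 9)%nat ->
  INR k <= 10 * s <= INR k + 1 -> INR l <= 10 * t <= INR l + 1 ->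
  BL Q s t = F Q k l s t.
Proof.
  intros Hk Hl Hs Ht.
  destruct (cell_spec s (br_unit k s Hk Hs)) as [_ Cs].
  destruct (cell_spec t (br_unit l t Hl Ht)) as [_ Ct].
  rewrite BL_F, (F_sw_i Q (cell s) k (cell t) s t Cs Hs).
  apply F_sw_j; assumption.
Qed.

Lemma mesh_rep k : (k <= 10)%nat -> exists k', (k' <= 9)%nat /\
   INR k' <= 10 * (INR k / 10) <= INR k' + 1 /\
   ((10 * (INR k / 10) - INR k' = 0 /\ k = k') \/ (10 * (INR k / 10) - INR k' = 1 /\ k = S k')).
Proof.
  intros Hk. destruct (Nat.eq_dec k 10) as [e|ne].
  - subst. exists 9%nat. rewrite INR10, INR9. split; [lia|]. split; [lra|]. right; split; [lra|reflexivity].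
  - exists k. split; [lia|]. split; [lra|]. left; split; [field|reflexivity].
Qed.

Lemma BL_mesh Q k l : (k <= 10)%nat -> (l <= 10)%nat -> BL Q (INR k / 10) (INR l / 10) = Q k l.
Proof.
  intros Hk Hl.
  destruct (mesh_rep k Hk) as [k' [Hk' [Bk Ek]]].
  destruct (mesh_rep l Hl) as [l' [Hl' [Bl El]]].
  rewrite (BL_any Q _ _ k' l' Hk' Hl' Bk Bl). unfold F; cbv zeta.
  destruct Ek as [[u e]|[u e]]; destruct El as [[v f]|[v f]]; rewrite u, v; subst; ring.
Qed.

Definition cellaff (g : R -> R) := forall k x y l, (k <= 9)%nat ->
  INR k <= 10 * x <= INR k + 1 -> INR k <= 10 * y <= INR k + 1 -> 0 <= l <= 1 ->
  g ((1 - l) * x + l * y) = (1 - l) * g x + l * g y.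

Lemma conv_br k x y l : INR k <= 10 * x <= INR k + 1 -> INR k <= 10 * y <= INR k + 1 -> 0 <= l <= 1 ->
  INR k <= 10 * ((1 - l) * x + l * y) <= INR k + 1.
Proof. intros. nra. Qed.

Lemma cellaff_BLs Q t : 0 <= t <= 1 -> cellaff (fun s => BL Q s t).
Proof.
  intros Ht k x y l Hk Hx Hy Hl.
  destruct (cell_spec t Ht) as [Hc Ct].
  rewrite (BL_any Q _ _ k (cell t) Hk Hc (conv_br k x y l Hx Hy Hl) Ct),
    (BL_any Q _ _ k (cell t) Hk Hc Hx Ct), (BL_any Q _ _ k (cell t) Hk Hc Hy Ct).
  unfold F; cbv zeta. ring.
Qed.

Lemma cellaff_BLt Q s : 0 <= s <= 1 -> cellaff (fun t => BL Q s t).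
Proof.
  intros Hs k x y l Hk Hx Hy Hl.
  destruct (cell_spec s Hs) as [Hc Cs].
  rewrite (BL_any Q _ _ (cell s) k Hc Hk Cs (conv_br k x y l Hx Hy Hl)),
    (BL_any Q _ _ (cell s) k Hc Hk Cs Hx), (BL_any Q _ _ (cell s) k Hc Hk Cs Hy).
  unfold F; cbv zeta. ring.
Qed.

Lemma cellaff_const c : cellaff (fun _ => c).
Proof. intros k x y l _ _ _ _. ring. Qed.
Lemma cellaff_add f g : cellaff f -> cellaff g -> cellaff (fun x => f x + g x).
Proof. intros Hf Hg k x y l a b c d. rewrite (Hf k x y l a b c d), (Hg k x y l a b c d). ring. Qed.
Lemma cellaff_sub f g : cellaff f -> cellaff g -> cellaff (fun x => f x - g x).
Proof. intros Hf Hg k x y l a b c d. rewrite (Hf k x y l a b c d), (Hg k x y l a b c d). ring. Qed.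

Lemma interval_red g a b : cellaff g -> 0 <= a -> a <= b -> b <= 1 ->
  (forall k, (k <= 10)%nat -> a <= INR k / 10 <= b -> 0 <= g (INR k / 10)) ->
  0 <= g a -> 0 <= g b -> forall x, a <= x <= b -> 0 <= g x.
Proof.
  intros Hg Ha Hab Hb Hm Hga Hgb x Hx.
  destruct (cell_spec x ltac:(lra)) as [Hk Cx]. set (k := cell x) in *.
  pose proof (S_INR k) as ES.
  assert (HSk : (S k <= 10)%nat) by lia.
  set (lo := Rmax a (INR k / 10)). set (hi := Rmin b ((INR k + 1) / 10)).
  assert (Glo : 0 <= g lo).
  { unfold lo. destruct (Rle_dec a (INR k / 10)).
    - rewrite Rmax_right by lra. apply Hm; [lia|lra].
    - rewrite Rmax_left by lra. exact Hga. }
  assert (Ghi : 0 <= g hi).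
  { unfold hi. destruct (Rle_dec b ((INR k + 1) / 10)).
    - rewrite Rmin_left by lra. exact Hgb.
    - rewrite Rmin_right by lra. rewrite <- ES. apply Hm; [exact HSk|]. rewrite ES. lra. }
  assert (Llo : lo <= x /\ INR k <= 10 * lo).
  { unfold lo. destruct (Rle_dec a (INR k / 10)).
    - rewrite Rmax_right by lra. lra.
    - rewrite Rmax_left by lra. lra. }
  assert (Lhi : x <= hi /\ 10 * hi <= INR k + 1).
  { unfold hi. destruct (Rle_dec b ((INR k + 1) / 10)).
    - rewrite Rmin_left by lra. lra.
    - rewrite Rmin_right by lra. lra. }
  destruct (Req_dec lo hi) as [e|ne].
  - replace x with lo by lra. exact Glo.
  - set (l := (x - lo) / (hi - lo)).
    assert (El : l * (hi - lo) = x - lo) by (unfold l; field; lra).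
    assert (Hl : 0 <= l <= 1) by nra.
    replace x with ((1 - l) * lo + l * hi) by nra.
    rewrite (Hg k lo hi l Hk ltac:(lra) ltac:(lra) Hl).
    nra.
Qed.

Lemma mesh_unit k : (k <= 10)%nat -> 0 <= INR k / 10 <= 1.
Proof. intros. apply le_INR in H. rewrite INR10 in H. pose proof (pos_INR k). lra. Qed.
Lemma mesh_le a b : INR a / 10 <= INR b / 10 -> (a <= b)%nat.
Proof. intros. apply INR_le. lra. Qed.
Lemma mesh0 : 0 = INR 0 / 10. Proof. simpl. field. Qed.
Lemma mesh10 : 1 = INR 10 / 10. Proof. rewrite INR10. field. Qed.

Lemma chain (e : R -> R -> R -> R -> R) :
  (forall s2 t1 t2, 0 <= s2 <= 1 -> 0 <= t1 <= 1 -> 0 <= t2 <= 1 -> cellaff (fun x => e x s2 t1 t2)) ->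
  (forall s1 t1 t2, 0 <= s1 <= 1 -> 0 <= t1 <= 1 -> 0 <= t2 <= 1 -> cellaff (fun x => e s1 x t1 t2)) ->
  (forall s1 s2 t2, 0 <= s1 <= 1 -> 0 <= s2 <= 1 -> 0 <= t2 <= 1 -> cellaff (fun x => e s1 s2 x t2)) ->
  (forall s1 s2 t1, 0 <= s1 <= 1 -> 0 <= s2 <= 1 -> 0 <= t1 <= 1 -> cellaff (fun x => e s1 s2 t1 x)) ->
  (forall s t1 t2, 0 <= s <= 1 -> 0 <= t1 -> t1 <= t2 -> t2 <= 1 -> 0 <= e s s t1 t2) ->
  (forall s1 s2 t, 0 <= s1 -> s1 <= s2 -> s2 <= 1 -> 0 <= t <= 1 -> 0 <= e s1 s2 t t) ->
  (forall i1 i2 j1 j2, (i1 <= i2 <= 10)%nat -> (j1 <= j2 <= 10)%nat ->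
     0 <= e (INR i1 / 10) (INR i2 / 10) (INR j1 / 10) (INR j2 / 10)) ->
  forall s1 s2 t1 t2, 0 <= s1 -> s1 <= s2 -> s2 <= 1 -> 0 <= t1 -> t1 <= t2 -> t2 <= 1 ->
    0 <= e s1 s2 t1 t2.
Proof.
  intros Hs1 Hs2 Ht1 Ht2 Ds Dt Hbase.
  assert (S1 : forall i1 i2 j2, (i1 <= i2 <= 10)%nat -> (j2 <= 10)%nat ->
     forall t1, 0 <= t1 <= INR j2 / 10 ->
     0 <= e (INR i1 / 10) (INR i2 / 10) t1 (INR j2 / 10)).
  { intros i1 i2 j2 Hi Hj.
    pose proof (mesh_unit i1 ltac:(lia)). pose proof (mesh_unit i2 ltac:(lia)).
    pose proof (mesh_unit j2 Hj).
    apply interval_red.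
    - apply Ht1; assumption.
    - lra.
    - lra.
    - lra.
    - intros k Hk [h1 h2]. apply mesh_le in h2. apply Hbase; lia.
    - pose proof (Hbase i1 i2 0%nat j2 ltac:(lia) ltac:(lia)) as h. rewrite <- mesh0 in h. exact h.
    - apply Hbase; lia. }
  assert (S2 : forall i1 i2, (i1 <= i2 <= 10)%nat ->
     forall t1 t2, 0 <= t1 -> t1 <= t2 -> t2 <= 1 ->
     0 <= e (INR i1 / 10) (INR i2 / 10) t1 t2).
  { intros i1 i2 Hi t1 t2 a b c.
    pose proof (mesh_unit i1 ltac:(lia)). pose proof (mesh_unit i2 ltac:(lia)).
    apply (interval_red (fun x => e (INR i1 / 10) (INR i2 / 10) t1 x) t1 1); [ | | | | | | | lra].
    - apply Ht2; lra.
    - lra.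
    - lra.
    - lra.
    - intros k Hk [h1 h2]. apply S1; [lia|lia|lra].
    - apply Dt; try lra. assert (INR i1 <= INR i2) by (apply le_INR; lia). lra.
    - pose proof (S1 i1 i2 10%nat ltac:(lia) ltac:(lia) t1) as h. rewrite <- mesh10 in h. apply h. lra. }
  assert (S3 : forall i2, (i2 <= 10)%nat ->
     forall s1 t1 t2, 0 <= s1 <= INR i2 / 10 -> 0 <= t1 -> t1 <= t2 -> t2 <= 1 ->
     0 <= e s1 (INR i2 / 10) t1 t2).
  { intros i2 Hi s1 t1 t2 Hs a b c.
    pose proof (mesh_unit i2 Hi).
    apply (interval_red (fun x => e x (INR i2 / 10) t1 t2) 0 (INR i2 / 10)); [ | | | | | | | lra].
    - apply Hs1; lra.
    - lra.
    - lra.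
    - lra.
    - intros k Hk [h1 h2]. apply mesh_le in h2. apply S2; [lia|lra|lra|lra].
    - pose proof (S2 0%nat i2 ltac:(lia) t1 t2 a b c) as h. rewrite <- mesh0 in h. exact h.
    - apply S2; [lia|lra|lra|lra]. }
  intros s1 s2 t1 t2 a b c d f g.
  apply (interval_red (fun x => e s1 x t1 t2) s1 1); [ | | | | | | | lra].
  - apply Hs2; lra.
  - lra.
  - lra.
  - lra.
  - intros k Hk [h1 h2]. apply S3; [lia|lra|lra|lra|lra].
  - apply Ds; lra.
  - pose proof (S3 10%nat ltac:(lia) s1 t1 t2) as h. rewrite <- mesh10 in h. apply h; lra.
Qed.

Definition le_b := forallb (fun i => forallb (fun j => Z.leb (gA i j) (gB i j)) s11) s11.
Lemma le_b_ok : le_b = true. Proof. vm_compute. reflexivity. Qed.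
Lemma AB_grid i j : (i <= 10)%nat -> (j <= 10)%nat -> mA i j <= mB i j.
Proof.
  intros Hi Hj. pose proof (fa2 (fun i j => Z.leb (gA i j) (gB i j)) le_b_ok i j Hi Hj) as E.
  cbv beta in E. apply Z.leb_le, IZR_le in E. rewrite mA_g, mB_g. lra.
Qed.

Lemma BA s t : 0 <= s <= 1 -> 0 <= t <= 1 -> BL mA s t <= BL mB s t.
Proof.
  intros Hs Ht. rewrite !BL_F.
  destruct (cell_spec s Hs) as [Hk Cs]. destruct (cell_spec t Ht) as [Hl Ct].
  set (k := cell s) in *. set (l := cell t) in *.
  pose proof (AB_grid k l ltac:(lia) ltac:(lia)).
  pose proof (AB_grid (S k) l ltac:(lia) ltac:(lia)).
  pose proof (AB_grid k (S l) ltac:(lia) ltac:(lia)).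
  pose proof (AB_grid (S k) (S l) ltac:(lia) ltac:(lia)).
  unfold F; cbv zeta.
  set (u := 10 * s - INR k). set (v := 10 * t - INR l).
  assert (0 <= u <= 1) by (unfold u; lra). assert (0 <= v <= 1) by (unfold v; lra).
  assert (0 <= (1 - u) * (1 - v)) by (apply Rmult_le_pos; lra).
  assert (0 <= u * (1 - v)) by (apply Rmult_le_pos; lra).
  assert (0 <= (1 - u) * v) by (apply Rmult_le_pos; lra).
  assert (0 <= u * v) by (apply Rmult_le_pos; lra).
  nra.
Qed.

Lemma BL_gn Q : d_grounded Q -> d_neutral Q -> grounded (BL Q) /\ neutral (BL Q).
Proof.
  intros Hg Hn. split; intros s Hs; unfold unitI in Hs;
  destruct (cell_spec s Hs) as [Hk Cs]; set (k := cell s) in *.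
  - assert (B0 : INR 0 <= 10 * 0 <= INR 0 + 1) by (simpl; lra).
    rewrite (BL_any Q s 0 k 0 Hk ltac:(lia) Cs B0), (BL_any Q 0 s 0 k ltac:(lia) Hk B0 Cs).
    unfold F; cbv zeta. simpl INR.
    rewrite (proj1 (Hg k ltac:(lia))), (proj1 (Hg (S k) ltac:(lia))),
      (proj2 (Hg k ltac:(lia))), (proj2 (Hg (S k) ltac:(lia))).
    split; ring.
  - assert (B1 : INR 9 <= 10 * 1 <= INR 9 + 1) by (rewrite INR9; lra).
    rewrite (BL_any Q s 1 k 9 Hk ltac:(lia) Cs B1), (BL_any Q 1 s 9 k ltac:(lia) Hk B1 Cs).
    unfold F; cbv zeta. rewrite INR9.
    rewrite (proj1 (Hn k ltac:(lia))), (proj1 (Hn (S k) ltac:(lia))),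
      (proj2 (Hn k ltac:(lia))), (proj2 (Hn (S k) ltac:(lia))).
    rewrite S_INR. split; field.
Qed.

Lemma imp_base i1 i2 j1 j2 : (i1 <= i2 <= 10)%nat -> (j1 <= j2 <= 10)%nat ->
  imprecise_ineqs (BL mA (INR i1 / 10) (INR j1 / 10)) (BL mA (INR i2 / 10) (INR j1 / 10))
    (BL mA (INR i2 / 10) (INR j2 / 10)) (BL mA (INR i1 / 10) (INR j2 / 10))
    (BL mB (INR i1 / 10) (INR j1 / 10)) (BL mB (INR i2 / 10) (INR j1 / 10))
    (BL mB (INR i2 / 10) (INR j2 / 10)) (BL mB (INR i1 / 10) (INR j2 / 10)).
Proof.
  intros Hi Hj. rewrite !BL_mesh by lia.
  destruct part_imp as [_ [_ [_ [_ H]]]]. exact (H i1 i2 j1 j2 Hi Hj).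
Qed.


Ltac caff1 := match goal with
  | |- cellaff (fun x => @?f x + @?g x) => apply (cellaff_add f g); caff1
  | |- cellaff (fun x => @?f x - @?g x) => apply (cellaff_sub f g); caff1
  | |- cellaff (fun x => BL _ x _) => apply cellaff_BLs; lra
  | |- cellaff (fun x => BL _ _ x) => apply cellaff_BLt; lra
  | |- cellaff (fun _ => _) => apply cellaff_const
  end.

Lemma part_BLimp : imprecise_copula (BL mA) (BL mB).
Proof.
  destruct (BL_gn mA (ground_ok _ gA_ground) (neutral_ok _ gA_neutral)) as [GA NA].
  destruct (BL_gn mB (ground_ok _ gB_ground) (neutral_ok _ gB_neutral)) as [GB NB].
  split; [exact GA|]. split; [exact NA|]. split; [exact GB|]. split; [exact NB|].
  intros s1 s2 t1 t2 a b c d f g. unfold imprecise_ineqs.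
  repeat split.
  - apply (chain (fun s1 s2 t1 t2 => BL mA s1 t1 + BL mB s2 t2 - BL mA s2 t1 - BL mA s1 t2));
      try (intros; caff1); try assumption.
    + intros s0 x1 x2 h1 h2 h3 h4; cbv beta. pose proof (BA s0 x2 ltac:(lra) ltac:(lra)). lra.
    + intros x1 x2 t0 h1 h2 h3 h4; cbv beta. pose proof (BA x2 t0 ltac:(lra) ltac:(lra)). lra.
    + intros i1 i2 j1 j2 H H0. pose proof (imp_base i1 i2 j1 j2 H H0) as [h _]. exact h.
  - apply (chain (fun s1 s2 t1 t2 => BL mB s1 t1 + BL mA s2 t2 - BL mA s2 t1 - BL mA s1 t2));
      try (intros; caff1); try assumption.
    + intros s0 x1 x2 h1 h2 h3 h4; cbv beta. pose proof (BA s0 x1 ltac:(lra) ltac:(lra)). lra.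
    + intros x1 x2 t0 h1 h2 h3 h4; cbv beta. pose proof (BA x1 t0 ltac:(lra) ltac:(lra)). lra.
    + intros i1 i2 j1 j2 H H0. pose proof (imp_base i1 i2 j1 j2 H H0) as [_ [h _]]. exact h.
  - apply (chain (fun s1 s2 t1 t2 => BL mB s1 t1 + BL mB s2 t2 - BL mB s2 t1 - BL mA s1 t2));
      try (intros; caff1); try assumption.
    + intros s0 x1 x2 h1 h2 h3 h4; cbv beta. pose proof (BA s0 x2 ltac:(lra) ltac:(lra)). lra.
    + intros x1 x2 t0 h1 h2 h3 h4; cbv beta. pose proof (BA x1 t0 ltac:(lra) ltac:(lra)). lra.
    + intros i1 i2 j1 j2 H H0. pose proof (imp_base i1 i2 j1 j2 H H0) as [_ [_ [h _]]]. exact h.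
  - apply (chain (fun s1 s2 t1 t2 => BL mB s1 t1 + BL mB s2 t2 - BL mA s2 t1 - BL mB s1 t2));
      try (intros; caff1); try assumption.
    + intros s0 x1 x2 h1 h2 h3 h4; cbv beta. pose proof (BA s0 x1 ltac:(lra) ltac:(lra)). lra.
    + intros x1 x2 t0 h1 h2 h3 h4; cbv beta. pose proof (BA x2 t0 ltac:(lra) ltac:(lra)). lra.
    + intros i1 i2 j1 j2 H H0. pose proof (imp_base i1 i2 j1 j2 H H0) as [_ [_ [_ h]]]. exact h.
Qed.

Lemma part_BLno : ~ (exists C : R -> R -> R, copula C /\
       forall s t, unitI s -> unitI t -> BL mA s t <= C s t <= BL mB s t).
Proof.
  intros [C [[Gc [Nc Rc]] Hb]]. apply part_nodisc.
  exists (fun i j => C (INR i / 10) (INR j / 10)). split; [split; [|split]|].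
  - intros i Hi. pose proof (mesh_unit i Hi). rewrite <- mesh0. apply Gc. exact H.
  - intros i Hi. pose proof (mesh_unit i Hi). rewrite <- mesh10. apply Nc. exact H.
  - intros i1 i2 j1 j2 Hi Hj. unfold Vd.
    pose proof (mesh_unit i1 ltac:(lia)). pose proof (mesh_unit i2 ltac:(lia)).
    pose proof (mesh_unit j1 ltac:(lia)). pose proof (mesh_unit j2 ltac:(lia)).
    assert (INR i1 <= INR i2) by (apply le_INR; lia).
    assert (INR j1 <= INR j2) by (apply le_INR; lia).
    apply (Rc (INR i1 / 10) (INR i2 / 10) (INR j1 / 10) (INR j2 / 10)); lra.
  - intros i j Hi Hj. rewrite <- (BL_mesh mA i j Hi Hj), <- (BL_mesh mB i j Hi Hj).
    apply Hb; apply mesh_unit; assumption.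
Qed.

Theorem mainTheorem17 :
  discrete_quasi_copula mA /\
  (forall i j, (i <= 10)%nat -> (j <= 10)%nat -> mB i j = Q_M mA i j) /\
  discrete_imprecise_copula mA mB /\
  ~ (exists C : meshfun, discrete_copula C /\
       forall i j, (i <= 10)%nat -> (j <= 10)%nat -> mA i j <= C i j <= mB i j) /\
  imprecise_copula (BL mA) (BL mB) /\
  ~ (exists C : R -> R -> R, copula C /\
       forall s t, unitI s -> unitI t -> BL mA s t <= C s t <= BL mB s t).
Proof.
  exact (conj part_qc (conj part_qm (conj part_imp (conj part_nodisc (conj part_BLimp part_BLno))))).
Qed.
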